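(* For all integers $n\ge1$ and $0\le l\le n-1$, $$\frac{N_l^{(n)}}{n}=\frac{B_l^{(n+l)}}{n+l}.$$
   Context: The Narumi numbers $N_l^{(a)}$ are defined by $\left(\frac{\log(1+t)}{t}\right)^a=\sum_{l\ge0}N_l^{(a)}\frac{t^l}{l!}$. The Bernoulli numbers of order $a$ are $B_l^{(a)}=B_l^{(a)}(0)$, where $\left(\frac{t}{e^t-1}\right)^a e^{xt}=\sum_{l\ge0}B_l^{(a)}(x)\frac{t^l}{l!}$. *)

(* Defs.v *)
(* Formal power series over rat represented by coefficient
   functions nat -> rat (coefficient of t^k). *)
From HB Require Import structures.
From mathcomp Require Import all_boot all_order all_algebra.
Set Implicit Arguments. Unset Strict Implicit. Unset Printing Implicit Defensive.
Import Order.TTheory GRing.Theory Num.Theory.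
Local Open Scope ring_scope.

Definition fps := nat -> rat.

Definition fps_one : fps := fun k => if k == 0%N then 1 else 0.

Definition fps_mul (s u : fps) : fps :=
  fun k => \sum_(i < k.+1) s i * u (k - i)%N.

Definition fps_pow (s : fps) (a : nat) : fps := iter a (fps_mul s) fps_one.

(* multiplicative inverse of a series with nonzero constant term:
   list of the first n+1 coefficients *)
Fixpoint fps_inv_list (s : fps) (n : nat) : seq rat :=
  match n with
  | 0 => [:: (s 0%N)^-1]
  | m.+1 => let l := fps_inv_list s m in
            rcons l (- (s 0%N)^-1 * \sum_(i < m.+1) s i.+1 * nth 0 l (m - i)%N)
  end.

Definition fps_inv (s : fps) : fps := fun k => nth 0 (fps_inv_list s k) k.

Definition log1p_over_t : fps := fun k => (-1) ^+ k / (k.+1)%:R.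

Definition expm1_over_t : fps := fun k => 1 / ((k.+1)`!)%:R.

Definition t_over_expm1 : fps := fps_inv expm1_over_t.

(* Narumi numbers: (log(1+t)/t)^a = sum_l N_l^(a) t^l / l! *)
Definition narumi (l a : nat) : rat := (l`!)%:R * fps_pow log1p_over_t a l.

(* Bernoulli numbers of order a: B_l^(a) = B_l^(a)(0),
   (t/(e^t-1))^a = sum_l B_l^(a) t^l / l!  (e^{0 t} = 1) *)
Definition bernoulli_order (l a : nat) : rat := (l`!)%:R * fps_pow t_over_expm1 a l.

(* Main.v *)
Require Import Defs.
From HB Require Import structures.
From mathcomp Require Import all_boot all_order all_algebra.
From mathcomp Require Import ring lra.
Import Order.TTheory GRing.Theory Num.Theory.
Local Open Scope ring_scope.
Set Implicit Arguments. Unset Strict Implicit. Unset Printing Implicit Defensive.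

Definition tr (N : nat) (s : fps) : {poly rat} := \poly_(i < N) s i.
Definition eqN (N : nat) (p q : {poly rat}) := exists r, p - q = r * 'X^N.
Definition Dp (p : {poly rat}) : {poly rat} := 'X * p^`().

Lemma eqN_coef N (p q : {poly rat}) : eqN N p q -> forall i, (i < N)%N -> p`_i = q`_i.
Proof. move=> [r h] i hi. apply/eqP; rewrite -subr_eq0 -coefB h coefMXn hi. done. Qed.

Lemma coef_eqN N (p q : {poly rat}) : (forall i, (i < N)%N -> p`_i = q`_i) -> eqN N p q.
Proof.
move=> h; exists (drop_poly N (p - q)).
rewrite -{1}(poly_take_drop N (p - q)).
suff -> : take_poly N (p - q) = 0 by rewrite add0r.
apply/polyP => i; rewrite coef_take_poly coef0 coefB. case: ifP => // hi.
by rewrite h // subrr.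
Qed.

Lemma eqN_refl N (p : {poly rat}) : eqN N p p.
Proof. exists 0; by rewrite subrr mul0r. Qed.

Lemma eqN_trans N (p q r : {poly rat}) : eqN N p q -> eqN N q r -> eqN N p r.
Proof. move=> [a ha] [b hb]; exists (a + b). rewrite mulrDl -ha -hb; ring. Qed.

Lemma eqN_mull N (r p q : {poly rat}) : eqN N p q -> eqN N (r * p) (r * q).
Proof. move=> [a ha]; exists (r * a). rewrite -mulrA -ha; ring. Qed.

Lemma eqN_add N (p q p' q' : {poly rat}) : eqN N p q -> eqN N p' q' -> eqN N (p + p') (q + q').
Proof. move=> [a ha] [b hb]; exists (a + b). rewrite mulrDl -ha -hb; ring. Qed.

Lemma coef_Dp (p : {poly rat}) i : (Dp p)`_i = p`_i *+ i.
Proof. rewrite /Dp coefXM; case: i => [|i] /=; first by rewrite mulr0n. by rewrite coef_deriv. Qed.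

Lemma eqN_D N (p q : {poly rat}) : eqN N p q -> eqN N (Dp p) (Dp q).
Proof. move=> h; apply: coef_eqN => i hi; by rewrite !coef_Dp (eqN_coef h hi). Qed.

Lemma Dp_mul (p q : {poly rat}) : Dp (p * q) = Dp p * q + p * Dp q.
Proof. rewrite /Dp derivM; ring. Qed.

Lemma Dp_pow (p : {poly rat}) n : Dp (p ^+ n.+1) = n.+1%:R * p ^+ n * Dp p.
Proof.
elim: n => [|n IH]; first by rewrite expr1 expr0 mulr1 mul1r.
rewrite exprS Dp_mul IH exprS. rewrite (natrD _ 1 n.+1). ring.
Qed.

Lemma tr_mul N s u i : (i < N)%N -> (tr N (fps_mul s u))`_i = (tr N s * tr N u)`_i.
Proof.
move=> hi; rewrite coef_poly hi coefM /fps_mul. apply: eq_bigr => j _.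
have hj : (j < N)%N by apply: leq_ltn_trans hi; rewrite -ltnS.
have hij : (i - j < N)%N by apply: leq_ltn_trans hi; rewrite leq_subr.
by rewrite !coef_poly hj hij.
Qed.

Lemma tr_pow N s a i : (i < N)%N -> fps_pow s a i = (tr N s ^+ a)`_i.
Proof.
elim: a i => [|a IH] i hi.
  by rewrite expr0 coef1 /fps_pow /= /fps_one; case: i {hi}.
rewrite exprS coefM /fps_pow /= /fps_mul. apply: eq_bigr => j _.
have hj : (j < N)%N by apply: leq_ltn_trans hi; rewrite -ltnS.
have hij : (i - j < N)%N by apply: leq_ltn_trans hi; rewrite leq_subr.
by rewrite coef_poly hj -IH.
Qed.

Lemma inv_list_size s n : size (fps_inv_list s n) = n.+1.
Proof. elim: n => [|n IH] //=; by rewrite size_rcons IH. Qed.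

Lemma inv_list_nth s n i : (i <= n)%N -> nth 0 (fps_inv_list s n) i = fps_inv s i.
Proof.
elim: n i => [|n IH] i hi; first by move: hi; rewrite leqn0 => /eqP ->.
case: (ltngtP i n.+1) hi => // [hlt _ | -> _ //].
rewrite /= nth_rcons inv_list_size hlt. apply: IH. by rewrite -ltnS.
Qed.

Lemma inv_rec s k : fps_inv s k.+1 = - (s 0%N)^-1 * \sum_(i < k.+1) s i.+1 * fps_inv s (k - i)%N.
Proof.
rewrite {1}/fps_inv /= nth_rcons inv_list_size ltnn eqxx. congr (_ * _).
apply: eq_bigr => i _. by rewrite inv_list_nth // leq_subr.
Qed.

Lemma inv_mul s : s 0%N != 0 -> forall k, fps_mul s (fps_inv s) k = fps_one k.
Proof.
move=> s0 [|k].
  by rewrite /fps_mul big_ord1 /fps_inv /= /fps_one /= mulfV.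
rewrite /fps_mul big_ord_recl subn0 inv_rec /fps_one /=.
rewrite [X in _ + X](eq_bigr (fun i : 'I_k.+1 => s i.+1 * fps_inv s (k - i)%N)); last first.
  by move=> i _; rewrite /bump /= add1n subSS.
by rewrite mulrA mulrN mulfV // mulN1r addNr.
Qed.

Lemma e0 : expm1_over_t 0%N = 1.
Proof. by rewrite /expm1_over_t /= divr1. Qed.

Lemma g0 : t_over_expm1 0%N = 1.
Proof.
have -> : t_over_expm1 0%N = (expm1_over_t 0%N)^-1 by [].
by rewrite e0 invr1.
Qed.

Lemma hGE N : eqN N (tr N t_over_expm1 * tr N expm1_over_t) 1.
Proof.
apply: coef_eqN => i hi. rewrite mulrC -tr_mul // coef_poly hi /t_over_expm1 inv_mul.
  by rewrite /fps_one coef1; case: (i == 0%N).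
by rewrite e0 oner_neq0.
Qed.

Lemma natr_neq0 n : (n.+1%:R : rat) != 0.
Proof. by rewrite pnatr_eq0. Qed.

Lemma fact_neq0 n : ((n`!)%:R : rat) != 0.
Proof. by rewrite pnatr_eq0 -lt0n fact_gt0. Qed.

Lemma hE N : eqN N (Dp (tr N expm1_over_t) + tr N expm1_over_t) (1 + 'X * tr N expm1_over_t).
Proof.
apply: coef_eqN => i hi. rewrite coefD coef_Dp coefD coef1 coefXM !coef_poly hi.
case: i hi => [|k] hk /=; first by rewrite mulr0n add0r e0 addr0.
rewrite ltnW // add0r /expm1_over_t -mulrSr -mulr_natr (factS k.+1) natrM.
have h1 := natr_neq0 k.+1. have h2 := fact_neq0 k.+1.
field. rewrite h2 /=. by move: h1; rewrite -addn2 natrD addrC.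
Qed.

Lemma hF N : eqN N ((1 + 'X) * (Dp (tr N log1p_over_t) + tr N log1p_over_t)) 1.
Proof.
have H : forall k, (k < N)%N -> (Dp (tr N log1p_over_t) + tr N log1p_over_t)`_k = (-1) ^+ k.
  move=> k hk; rewrite coefD coef_Dp coef_poly hk /log1p_over_t -mulrSr -mulr_natr.
  have h1 := natr_neq0 k. field. by move: h1; rewrite -addn1 natrD addrC.
apply: coef_eqN => i hi. rewrite mulrDl mul1r coefD coefXM coef1 H //.
case: i hi => [|k] hk /=; first by rewrite addr0.
by rewrite H ?(ltnW hk) // exprS mulN1r addNr.
Qed.

Lemma eqN_eqr N (p q q' : {poly rat}) : eqN N p q -> q = q' -> eqN N p q'.
Proof. by move=> h <-. Qed.

Lemma Dp1 : Dp 1 = 0.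
Proof. by rewrite /Dp derivC mulr0. Qed.

Lemma hG N : eqN N (Dp (tr N t_over_expm1))
  (tr N t_over_expm1 - 'X * tr N t_over_expm1 - tr N t_over_expm1 ^+ 2).
Proof.
set G := tr N t_over_expm1. set E := tr N expm1_over_t.
have [r1 h1] := hGE N. have [r2 h2] := eqN_D (hGE N). have [r3 h3] := hE N.
rewrite -/G -/E in h1 h2 h3.
exists (- Dp G * r1 + G * r2 - G ^+ 2 * r3 + (G - 'X * G) * r1).
have -> : Dp G - (G - 'X * G - G ^+ 2) =
   - Dp G * (G * E - 1) + G * (Dp (G * E) - Dp 1) - G ^+ 2 * ((Dp E + E) - (1 + 'X * E))
   + (G - 'X * G) * (G * E - 1).
  rewrite Dp_mul Dp1; ring.
rewrite h1 h2 h3; ring.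
Qed.

Lemma coef0X (p : {poly rat}) n : (p ^+ n)`_0 = p`_0 ^+ n.
Proof. elim: n => [|n IH]; first by rewrite !expr0 coef1. by rewrite !exprS coef0M IH. Qed.

Lemma coefXMS (p : {poly rat}) i : ('X * p)`_i.+1 = p`_i.
Proof. by rewrite coefXM. Qed.

Lemma RA N n l : (l.+1 < N)%N ->
  let a l n := (tr N log1p_over_t ^+ n)`_l in
  a l.+1 n.+1 *+ l.+1 + a l.+1 n.+1 *+ n.+1 + a l n.+1 *+ l + a l n.+1 *+ n.+1
  = a l.+1 n *+ n.+1.
Proof.
move=> hl a. rewrite /a {a}. set F := tr N log1p_over_t.
have E1 : (1 + 'X) * (Dp (F ^+ n.+1) + n.+1%:R * F ^+ n.+1) =
     (n.+1%:R * F ^+ n) * ((1 + 'X) * (Dp F + F)).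
  rewrite Dp_pow exprSr. move: (n.+1%:R : {poly rat}) => c. ring.
have H : eqN N ((1 + 'X) * (Dp (F ^+ n.+1) + n.+1%:R * F ^+ n.+1)) (n.+1%:R * F ^+ n).
  rewrite E1. apply: (eqN_eqr (eqN_mull (n.+1%:R * F ^+ n) (hF N))). by rewrite mulr1.
have := eqN_coef H hl.
rewrite mulrDl mul1r coefD coefXMS !coefD !coef_Dp !mulr_natl !coefMn.
move=> <-. by rewrite !addrA.
Qed.

Lemma RB N m l : (l.+1 < N)%N ->
  let b l m := (tr N t_over_expm1 ^+ m)`_l in
  b l.+1 m.+1 *+ l.+1 = (b l.+1 m.+1 - b l m.+1 - b l.+1 m.+2) *+ m.+1.
Proof.
move=> hl b. rewrite /b {b}. set G := tr N t_over_expm1.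
have H : eqN N (Dp (G ^+ m.+1)) (m.+1%:R * (G ^+ m.+1 - 'X * G ^+ m.+1 - G ^+ m.+2)).
  rewrite Dp_pow. apply: (eqN_eqr (eqN_mull (m.+1%:R * G ^+ m) (hG N))).
  rewrite -/G !exprS. move: (m.+1%:R : {poly rat}) => c. ring.
have := eqN_coef H hl.
rewrite coef_Dp !mulr_natl !coefMn !coefB coefXMS.
by move=> ->.
Qed.

Lemma mainP N l n : (l < N)%N ->
  (tr N log1p_over_t ^+ n)`_l * (n + l)%:R = (tr N t_over_expm1 ^+ (n + l))`_l * n%:R.
Proof.
elim: l n => [|l IHl] n hl.
  rewrite !coef0X !coef_poly hl g0 /log1p_over_t /= expr0 divr1 !expr1n addn0.
  by [].
elim: n => [|n IHn].
  by rewrite expr0 coef1 mul0r mulr0.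
have ha := RA n hl. have hb := RB (n + l) hl.
have hi := IHl n.+1 (ltnW hl).
move: ha hb hi IHn; rewrite /= !addnS !addSn.
set A := (tr N log1p_over_t ^+ n.+1)`_l.+1. set a1 := (tr N log1p_over_t ^+ n)`_l.+1.
set a2 := (tr N log1p_over_t ^+ n.+1)`_l.
set B := (tr N t_over_expm1 ^+ (n + l).+2)`_l.+1. set b1 := (tr N t_over_expm1 ^+ (n + l).+1)`_l.+1.
set b2 := (tr N t_over_expm1 ^+ (n + l).+1)`_l.
move/eqP; rewrite -subr_eq0 => /eqP ha.
move/eqP; rewrite -subr_eq0 => /eqP hb.
move/eqP; rewrite -subr_eq0 => /eqP hi.
move/eqP; rewrite -subr_eq0 => /eqP hn.
clearbody A a1 a2 B b1 b2. clear IHl.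
have E : (n + l).+1%:R * (A * (n + l).+2%:R - B * n.+1%:R) =
  (n + l).+1%:R * (A *+ l.+1 + A *+ n.+1 + a2 *+ l + a2 *+ n.+1 - a1 *+ n.+1)
  - (n + l).+1%:R * (a2 * (n + l).+1%:R - b2 * n.+1%:R)
  + n.+1%:R * (a1 * (n + l).+1%:R - b1 * n%:R)
  - n.+1%:R * (b1 *+ l.+1 - (b1 - b2 - B) *+ (n + l).+1).
  ring.
rewrite ha hb hi hn !mulr0 !(subr0, addr0) in E.
move/eqP: E; rewrite mulf_eq0 pnatr_eq0 /= subr_eq0 => /eqP ->. done.
Qed.

Theorem corollary5 (n l : nat) (hn : (1 <= n)%N) (hl : (l <= n - 1)%N) :
  narumi l n / n%:R = bernoulli_order l (n + l) / (n + l)%:R.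
Proof.
have P := @mainP l.+1 l n (ltnSn l).
rewrite /narumi /bernoulli_order (@tr_pow l.+1 log1p_over_t n l (ltnSn l)) (@tr_pow l.+1 t_over_expm1 (n + l) l (ltnSn l)).
move: P. set a := (tr l.+1 log1p_over_t ^+ n)`_l. set b := (tr l.+1 t_over_expm1 ^+ (n + l))`_l.
case: n hn hl a b => // n _ _ a b P.
have h1 := natr_neq0 (n + l). have h2 := natr_neq0 n.
have ha : a = b * n.+1%:R / (n.+1 + l)%:R by rewrite -P mulfK // addSn.
rewrite ha addSn. field. have := ler0n rat n. have := ler0n rat l. move=> hl0 hn0.
apply/andP; split; apply: lt0r_neq0; lra.
Qed.
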